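(* For each $x\in\Omega$, the set $\bigcup_{n\ge0}T^{-n}(x)$ is dense in $\Omega$.
   Context: Let $I=[0,1)$ with its usual metric $d_I$, fix $\theta\in(0,1)$, and let $\Omega=I^{\mathbb Z}$ with metric $d(x,y)=\sup_{k\in\mathbb Z}\theta^{|k|}d_I(x_k,y_k)$. Let $\tau:I\to I$ have full branches, so that $b=\#\tau^{-1}(t)$ is constant. Assume there is $\eta\in(0,1)$ such that every inverse branch $\zeta$ of $\tau$ satisfies $d_I(\zeta(s),\zeta(t))\le\eta\,d_I(s,t)$. Let $(\bar\tau x)_i=\tau(x_i)$ and let $\sigma$ be the shift $(\sigma x)_i=x_{i+1}$. Let $E:\Omega\to\Omega$ be invertible and suppose there is $C_E\in(0,\eta^{-1})$ with $d(\sigma^nE^{-1}x,\sigma^nE^{-1}y)\le C_E\,d(\sigma^nx,\sigma^ny)$ for all $n\in\mathbb Z$ and $x,y\in\Omega$. The coupled map is $T=E\circ\bar\tau$. *)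

(* Defs.v *)
From Stdlib Require Import Reals Lra ZArith ClassicalEpsilon.
Open Scope R_scope.

Definition inI (s : R) : Prop := 0 <= s < 1.

Definition seqZ := Z -> R.
Definition inOmega (x : seqZ) : Prop := forall k : Z, inI (x k).

Definition dterms (theta : R) (x y : seqZ) : R -> Prop :=
  fun v => exists k : Z, v = theta ^ (Z.abs_nat k) * Rabs (x k - y k).

(* d(x,y) = sup_k theta^|k| d_I(x_k,y_k)  (the least upper bound, chosen
   classically; for x, y in Omega it exists since the terms are in [0,1)). *)
Definition dOmega (theta : R) (x y : seqZ) : R :=
  epsilon (inhabits 0) (fun r => is_lub (dterms theta x y) r).

Definition shiftZ (n : Z) (x : seqZ) : seqZ := fun i => x (i + n)%Z.

Definition taubar (tau : R -> R) (x : seqZ) : seqZ := fun i => tau (x i).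

Definition Tmap (E : seqZ -> seqZ) (tau : R -> R) (x : seqZ) : seqZ :=
  E (taubar tau x).

Definition full_branches (tau : R -> R) (b : nat) (a : nat -> R) : Prop :=
  (forall s, inI s -> inI (tau s)) /\
  (1 <= b)%nat /\ a 0%nat = 0 /\ a b = 1 /\
  (forall j, (j < b)%nat -> a j < a (S j)) /\
  (forall j, (j < b)%nat ->
     (forall u v, a j <= u < a (S j) -> a j <= v < a (S j) ->
        tau u = tau v -> u = v) /\
     (forall t, inI t -> exists u, a j <= u < a (S j) /\ tau u = t)).

(* every inverse branch zeta_j (the inverse of tau on [a_j,a_{j+1})) is an
   eta-contraction: d_I(zeta_j s, zeta_j t) <= eta d_I(s,t).  Stated without
   naming zeta_j: for u = zeta_j s, v = zeta_j t. *)
Definition inverse_branches_contract (tau : R -> R) (b : nat) (a : nat -> R)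
  (eta : R) : Prop :=
  forall j, (j < b)%nat ->
    forall u v, a j <= u < a (S j) -> a j <= v < a (S j) ->
      Rabs (u - v) <= eta * Rabs (tau u - tau v).

(* Main.v *)
Require Import Defs.
From Stdlib Require Import Reals ZArith Lra Lia ClassicalEpsilon FunctionalExtensionality.
Open Scope R_scope.

Lemma term_bound theta x y k : 0 < theta < 1 -> inOmega x -> inOmega y ->
  theta ^ (Z.abs_nat k) * Rabs (x k - y k) <= 1.
Proof.
  intros Ht Hx Hy.
  destruct (Hx k), (Hy k).
  assert (0 <= theta ^ Z.abs_nat k <= 1).
  { split. apply pow_le; lra. rewrite <- (pow1 (Z.abs_nat k)). apply pow_incr; lra. }
  assert (Rabs (x k - y k) <= 1) by (apply Rabs_le; lra).
  assert (0 <= Rabs (x k - y k)) by apply Rabs_pos.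
  nra.
Qed.

Lemma d_lub theta x y : 0 < theta < 1 -> inOmega x -> inOmega y ->
  is_lub (dterms theta x y) (dOmega theta x y).
Proof.
  intros Ht Hx Hy. unfold dOmega. apply epsilon_spec.
  destruct (completeness (dterms theta x y)) as [m Hm].
  - exists 1. intros v [k ->]. now apply term_bound.
  - exists (theta ^ Z.abs_nat 0 * Rabs (x 0%Z - y 0%Z)). now exists 0%Z.
  - now exists m.
Qed.

Lemma d_le1 theta x y : 0 < theta < 1 -> inOmega x -> inOmega y ->
  dOmega theta x y <= 1.
Proof.
  intros Ht Hx Hy. destruct (d_lub theta x y Ht Hx Hy) as [_ H2].
  apply H2. intros v [k ->]. now apply term_bound.
Qed.

Lemma d_compare theta u v s t c : 0 < theta < 1 -> 0 <= c ->
  inOmega u -> inOmega v -> inOmega s -> inOmega t ->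
  (forall k, Rabs (u k - v k) <= c * Rabs (s k - t k)) ->
  dOmega theta u v <= c * dOmega theta s t.
Proof.
  intros Ht Hc Hu Hv Hs Ht' H.
  destruct (d_lub theta u v Ht Hu Hv) as [_ H2].
  destruct (d_lub theta s t Ht Hs Ht') as [H3 _].
  apply H2. intros w [k ->].
  assert (Hp : 0 <= theta ^ Z.abs_nat k) by (apply pow_le; lra).
  assert (H4 : theta ^ Z.abs_nat k * Rabs (s k - t k) <= dOmega theta s t)
    by (apply H3; now exists k).
  specialize (H k).
  apply Rle_trans with (theta ^ Z.abs_nat k * (c * Rabs (s k - t k))).
  - now apply Rmult_le_compat_l.
  - replace (theta ^ Z.abs_nat k * (c * Rabs (s k - t k))) with
      (c * (theta ^ Z.abs_nat k * Rabs (s k - t k))) by ring.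
    now apply Rmult_le_compat_l.
Qed.

Lemma a_mono tau b a : full_branches tau b a ->
  forall i j, (i <= j <= b)%nat -> a i <= a j.
Proof.
  intros [_ [_ [_ [_ [Hinc _]]]]] i j Hij.
  induction j.
  - assert (i = 0)%nat by lia. subst; lra.
  - destruct (Nat.eq_dec i (S j)). subst; lra.
    assert (a i <= a j) by (apply IHj; lia).
    assert (a j < a (S j)) by (apply Hinc; lia). lra.
Qed.

Lemma find_branch tau b a : full_branches tau b a ->
  forall m, (m <= b)%nat -> forall u, a 0%nat <= u < a m ->
  exists j, (j < m)%nat /\ a j <= u < a (S j).
Proof.
  intros Hf m. induction m; intros Hm u Hu.
  - lra.
  - destruct (Rlt_le_dec u (a m)).
    + destruct (IHm ltac:(lia) u ltac:(lra)) as [j [? ?]]. exists j; split; [lia|auto].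
    + exists m; split; [lia|lra].
Qed.

Lemma step theta eta C_E tau b a E Einv
  (Htheta : 0 < theta < 1) (Heta : 0 < eta < 1)
  (Hfull : full_branches tau b a)
  (Hcontr : inverse_branches_contract tau b a eta)
  (HE_Omega : forall x, inOmega x -> inOmega (E x))
  (HEinv_Omega : forall x, inOmega x -> inOmega (Einv x))
  (HEinvE : forall x, inOmega x -> Einv (E x) = x)
  (HEEinv : forall x, inOmega x -> E (Einv x) = x)
  (HCE : 0 < C_E < / eta)
  (HEinv_lip : forall (n : Z) (x y : seqZ), inOmega x -> inOmega y ->
     dOmega theta (shiftZ n (Einv x)) (shiftZ n (Einv y))
       <= C_E * dOmega theta (shiftZ n x) (shiftZ n y)) :
  forall x y, inOmega x -> inOmega y ->
  exists z, inOmega z /\ Tmap E tau z = x /\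
    dOmega theta z y <= eta * C_E * dOmega theta x (Tmap E tau y).
Proof.
  intros x y Hx Hy.
  set (s := Einv x). assert (Hs : inOmega s) by now apply HEinv_Omega.
  set (t := taubar tau y).
  assert (Ht : inOmega t).
  { intro k. unfold t, taubar. apply (proj1 Hfull). apply Hy. }
  assert (Hex : forall k, exists u, inI u /\ tau u = s k /\
            Rabs (u - y k) <= eta * Rabs (s k - t k)).
  { intro k. pose proof Hfull as (_ & Hb & Ha0 & Hab & Hinc & Hbr).
    destruct (find_branch tau b a Hfull b (le_n b) (y k)) as [j [Hj Hyj]].
    { destruct (Hy k). lra. }
    destruct (Hbr j Hj) as [_ Hsurj].
    destruct (Hsurj (s k) (Hs k)) as [u [Hu Htu]].
    exists u. split; [|split; auto].
    - assert (0 <= a j). { rewrite <- Ha0. apply (a_mono tau b a Hfull); lia. }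
      assert (a (S j) <= 1). { rewrite <- Hab. apply (a_mono tau b a Hfull); lia. }
      unfold inI; lra.
    - unfold t, taubar. rewrite <- Htu. apply (Hcontr j Hj); auto. }
  set (z := fun k => proj1_sig (constructive_indefinite_description _ (Hex k))).
  assert (Hz : forall k, inI (z k) /\ tau (z k) = s k /\
            Rabs (z k - y k) <= eta * Rabs (s k - t k)).
  { intro k. unfold z. destruct (constructive_indefinite_description _ (Hex k)); auto. }
  assert (HzO : inOmega z) by (intro k; apply Hz).
  exists z. split; [auto|split].
  - unfold Tmap. replace (taubar tau z) with s. apply HEEinv; auto.
    extensionality k. unfold taubar. symmetry; apply Hz.
  - assert (H1 : dOmega theta z y <= eta * dOmega theta s t).
    { apply d_compare; auto; try lra. intro k; apply Hz. }
    assert (H2 : dOmega theta s t <= C_E * dOmega theta x (Tmap E tau y)).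
    { pose proof (HEinv_lip 0%Z x (E t) Hx (HE_Omega t Ht)) as H.
      assert (Hsh : forall w, shiftZ 0 w = w).
      { intro w. extensionality i. unfold shiftZ. now rewrite Z.add_0_r. }
      rewrite !Hsh, HEinvE in H; auto. }
    assert (0 <= dOmega theta s t).
    { destruct (d_lub theta s t Htheta Hs Ht) as [H3 _].
      apply Rle_trans with (theta ^ Z.abs_nat 0 * Rabs (s 0%Z - t 0%Z)).
      - apply Rmult_le_pos; [apply pow_le; lra| apply Rabs_pos].
      - apply H3; now exists 0%Z. }
    apply Rle_trans with (eta * (C_E * dOmega theta x (Tmap E tau y))).
    + apply Rle_trans with (eta * dOmega theta s t); auto.
      apply Rmult_le_compat_l; lra.
    + right; ring.
Qed.

Theorem mainTheorem11
  (theta eta C_E : R) (tau : R -> R) (b : nat) (a : nat -> R)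
  (E Einv : seqZ -> seqZ)
  (Htheta : 0 < theta < 1)
  (Heta : 0 < eta < 1)
  (Hfull : full_branches tau b a)
  (Hcontr : inverse_branches_contract tau b a eta)
  (HE_Omega : forall x, inOmega x -> inOmega (E x))
  (HEinv_Omega : forall x, inOmega x -> inOmega (Einv x))
  (HEinvE : forall x, inOmega x -> Einv (E x) = x)
  (HEEinv : forall x, inOmega x -> E (Einv x) = x)
  (HCE : 0 < C_E < / eta)
  (HEinv_lip : forall (n : Z) (x y : seqZ), inOmega x -> inOmega y ->
     dOmega theta (shiftZ n (Einv x)) (shiftZ n (Einv y))
       <= C_E * dOmega theta (shiftZ n x) (shiftZ n y)) :
  forall x : seqZ, inOmega x ->
    forall y : seqZ, inOmega y -> forall eps : R, 0 < eps ->
      exists (n : nat) (z : seqZ),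
        inOmega z /\ Nat.iter n (Tmap E tau) z = x /\ dOmega theta z y < eps.
Proof.
  pose proof (step theta eta C_E tau b a E Einv Htheta Heta Hfull Hcontr HE_Omega
    HEinv_Omega HEinvE HEEinv HCE HEinv_lip) as Hstep.
  set (q := eta * C_E).
  assert (Hq : 0 < q < 1).
  { unfold q. split. nra.
    apply Rmult_lt_reg_l with (/ eta). apply Rinv_0_lt_compat; lra.
    rewrite <- Rmult_assoc, Rinv_l, Rmult_1_l, Rmult_1_r; lra. }
  assert (HTO : forall w, inOmega w -> inOmega (Tmap E tau w)).
  { intros w Hw. apply HE_Omega. intro k. apply (proj1 Hfull). apply Hw. }
  assert (HiterO : forall n w, inOmega w -> inOmega (Nat.iter n (Tmap E tau) w)).
  { induction n; intros w Hw; simpl; auto. }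
  assert (Hind : forall n x y, inOmega x -> inOmega y ->
    exists z, inOmega z /\ Nat.iter n (Tmap E tau) z = x /\
      dOmega theta z y <= q ^ n * dOmega theta x (Nat.iter n (Tmap E tau) y)).
  { induction n; intros x y Hx Hy.
    - exists x. split; auto. split; auto. simpl.
      assert (Hxy: dOmega theta x y <= 1 * dOmega theta x y) by lra.
      exact Hxy.
    - destruct (IHn x (Tmap E tau y) Hx (HTO y Hy)) as [w [Hw [Hwx Hwd]]].
      destruct (Hstep w y Hw Hy) as [z [Hz [Hzw Hzd]]].
      exists z. split; auto. split.
      + rewrite Nat.iter_succ_r, Hzw; auto.
      + rewrite Nat.iter_succ_r. simpl (q ^ S n). fold q in Hzd.
        apply Rle_trans with (q * dOmega theta w (Tmap E tau y)); auto.
        rewrite Rmult_assoc. apply Rmult_le_compat_l; lra. }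
  intros x Hx y Hy eps Heps.
  destruct (pow_lt_1_zero q ltac:(rewrite Rabs_pos_eq; lra) eps Heps) as [N HN].
  destruct (Hind N x y Hx Hy) as [z [Hz [Hzx Hzd]]].
  exists N, z. split; auto. split; auto.
  specialize (HN N (le_n N)). rewrite Rabs_pos_eq in HN by (apply pow_le; lra).
  assert (H1 := d_le1 theta x (Nat.iter N (Tmap E tau) y) Htheta Hx (HiterO N y Hy)).
  assert (0 <= q ^ N) by (apply pow_le; lra).
  assert (q ^ N * dOmega theta x (Nat.iter N (Tmap E tau) y) <= q ^ N) by nra.
  lra.
Qed.
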